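(* Let $G'=(V',E')$ be a connected subgraph of the hypercube graph on $N$ with $\emptyset\in V'$ and $N\in V'$, and let $w\colon E'\to(0,\infty)$. Let $v\colon V'\to\mathbb{R}$ with $v(\emptyset)=0$. For each $i\in N$ there is a unique $v_i\colon V'\to\mathbb{R}$ with $v_i(\emptyset)=0$ and $\mathrm{d}v_i = P\mathrm{d}_iv$, and these satisfy: (a) $\sum_{i\in N}v_i=v$; (b) if $v(S\cup\{i\})-v(S)=0$ for every edge $(S,S\cup\{i\})\in E'$, then $v_i=0$; (d) for any two such $v,v'$ and $\alpha,\alpha'\in\mathbb{R}$, $(\alpha v+\alpha'v')_i=\alpha v_i+\alpha' v'_i$.
   Context: Let $N$ be a finite set of players. The hypercube graph has vertex set $2^N$ and oriented edges $(S,S\cup\{i\})$ for $i\in N$, $S\subset N\setminus\{i\}$; $G'$ is a subgraph (a subset $V'$ of vertices and a subset $E'$ of edges between vertices of $V'$) with the inherited orientation. $\ell^2(V')$ is the space of real functions on $V'$ and $\ell^2_w(E')$ the space of real functions on $E'$ with inner product $\langle f,g\rangle_w=\sum_{e\in E'}w(e)f(e)g(e)$. $\mathrm{d}\colon\ell^2(V')\to\ell^2_w(E')$ is $\mathrm{d}u(S,S\cup\{i\})=u(S\cup\{i\})-u(S)$; for $i\in N$, $\mathrm{d}_i u(S,S\cup\{j\})=u(S\cup\{i\})-u(S)$ if $j=i$ and $0$ if $j\neq i$, for edges in $E'$. $P$ is the $\langle\cdot,\cdot\rangle_w$-orthogonal projection of $\ell^2_w(E')$ onto the range of $\mathrm{d}$.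 *)

(* Defs.v *)
From HB Require Import structures.
From mathcomp Require Import all_boot all_order all_algebra.
Set Implicit Arguments. Unset Strict Implicit. Unset Printing Implicit Defensive.
Import Order.TTheory GRing.Theory Num.Theory.
Local Open Scope ring_scope.

(* Players: a finite type T (the set N is [set: T]).  Vertices of the hypercube
   are subsets {set T}.  An oriented hypercube edge (S, S :|: [set i]) with
   i \notin S is encoded by the pair (S, i). *)

Definition edge (T : finType) := ({set T} * T)%type.

Definition is_subgraph (T : finType) (V : {set {set T}}) (E : {set edge T}) : Prop :=
  forall e, e \in E -> [/\ e.2 \notin e.1, e.1 \in V & e.1 :|: [set e.2] \in V].

Definition adj (T : finType) (E : {set edge T}) : rel {set T} :=
  fun S S' => [exists e in E,
     ((e.1 == S) && (e.1 :|: [set e.2] == S')) ||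
     ((e.1 == S') && (e.1 :|: [set e.2] == S))].

Definition connected_subgraph (T : finType) (V : {set {set T}}) (E : {set edge T}) : Prop :=
  forall S S', S \in V -> S' \in V -> connect (adj E) S S'.

Definition dd (R : ringType) (T : finType) (u : {set T} -> R) : edge T -> R :=
  fun e => u (e.1 :|: [set e.2]) - u e.1.

Definition ddi (R : ringType) (T : finType) (i : T) (u : {set T} -> R) : edge T -> R :=
  fun e => if e.2 == i then u (e.1 :|: [set i]) - u e.1 else 0.

Definition ipw (R : ringType) (T : finType) (E : {set edge T}) (w : edge T -> R)
  (f g : edge T -> R) : R := \sum_(e in E) w e * f e * g e.

(* g = P f, where P is the <.,.>_w-orthogonal projection of l2_w(E') onto the
   range of d: g lies in the range of d and f - g is w-orthogonal to that range.
   Functions on E' are compared on E' only. *)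
Definition IsOrthProj (R : ringType) (T : finType) (V : {set {set T}}) (E : {set edge T})
  (w : edge T -> R) (f g : edge T -> R) : Prop :=
  (exists u : {set T} -> R, forall e, e \in E -> g e = dd u e) /\
  (forall u : {set T} -> R, ipw E w (fun e => f e - g e) (dd u) = 0).

Definition is_component (R : ringType) (T : finType) (V : {set {set T}}) (E : {set edge T})
  (w : edge T -> R) (v : {set T} -> R) (i : T) (ui : {set T} -> R) : Prop :=
  ui set0 = 0 /\ IsOrthProj V E w (ddi i v) (dd ui).

(* Main.v *)
Require Import Defs.
From HB Require Import structures.
From mathcomp Require Import all_boot all_order all_algebra.
From mathcomp Require Import ring.
Import Order.TTheory GRing.Theory Num.Theory.
Local Open Scope ring_scope.

Lemma ipw_ext (R : realFieldType) (T : finType) (E : {set edge T}) (w : edge T -> R)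
  f f' g g' : (forall e, e \in E -> f e = f' e) -> (forall e, e \in E -> g e = g' e) ->
  ipw E w f g = ipw E w f' g'.
Proof. by move=> hf hg; apply: eq_bigr => e he; rewrite hf // hg. Qed.

Lemma ipw_lin_l (R : realFieldType) (T : finType) (E : {set edge T}) (w : edge T -> R)
  a b f g h : ipw E w (fun e => a * f e + b * g e) h = a * ipw E w f h + b * ipw E w g h.
Proof.
rewrite /ipw !mulr_sumr -big_split /=; apply: eq_bigr => e _; ring.
Qed.

Lemma ipw_lin_r (R : realFieldType) (T : finType) (E : {set edge T}) (w : edge T -> R)
  a b f g h : ipw E w h (fun e => a * f e + b * g e) = a * ipw E w h f + b * ipw E w h g.
Proof.
rewrite /ipw !mulr_sumr -big_split /=; apply: eq_bigr => e _; ring.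
Qed.

Lemma ipw_sum_l (R : realFieldType) (T : finType) (E : {set edge T}) (w : edge T -> R)
  (F : T -> edge T -> R) h :
  ipw E w (fun e => \sum_i F i e) h = \sum_i ipw E w (F i) h.
Proof.
rewrite /ipw exchange_big /=; apply: eq_bigr => e _.
by rewrite mulr_sumr mulr_suml; apply: eq_bigr => i _.
Qed.

Lemma ipw_zero_l (R : realFieldType) (T : finType) (E : {set edge T}) (w : edge T -> R)
  f h : (forall e, e \in E -> f e = 0) -> ipw E w f h = 0.
Proof.
by move=> hf; rewrite /ipw big1 // => e he; rewrite hf // mulr0 mul0r.
Qed.

Lemma ipw_pos (R : realFieldType) (T : finType) (E : {set edge T}) (w : edge T -> R)
  (hw : forall e, e \in E -> 0 < w e) f :
  ipw E w f f = 0 -> forall e, e \in E -> f e = 0.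
Proof.
move=> h0 e he.
have /psumr_eq0P H : \sum_(e in E) w e * f e * f e = 0 by [].
have /H/(_ e he)/eqP : forall x, x \in E -> 0 <= w x * f x * f x.
  move=> x hx; rewrite -mulrA; apply: mulr_ge0; first exact: ltW (hw x hx).
  by rewrite -expr2 sqr_ge0.
rewrite -mulrA mulf_eq0 (gt_eqF (hw e he)) /= mulf_eq0 orbb.
by move/eqP.
Qed.

Lemma dd_const (R : realFieldType) (T : finType) (E : {set edge T}) (V : {set {set T}})
  (hconn : connected_subgraph V E) (h0 : set0 \in V) (x : {set T} -> R) :
  (forall e, e \in E -> dd x e = 0) -> forall S, S \in V -> x S = x set0.
Proof.
move=> hx S hS.
have cl : closed (adj E) [pred S | x S == x set0].
  move=> A B /existsP[e /andP[he /orP[/andP[/eqP h1 /eqP h2]|/andP[/eqP h1 /eqP h2]]]];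
  have := hx e he; rewrite /dd h2 h1 !inE => /eqP; rewrite subr_eq0 => /eqP ->//.
have := closed_connect cl (hconn _ _ h0 hS).
by rewrite !inE eqxx => /esym/eqP.
Qed.

Lemma uniq_gen (R : realFieldType) (T : finType) (V : {set {set T}}) (E : {set edge T})
  (w : edge T -> R) (hconn : connected_subgraph V E) (h0 : set0 \in V)
  (hw : forall e, e \in E -> 0 < w e) (F : edge T -> R) (y z : {set T} -> R) :
  (forall x, ipw E w (fun e => F e - dd y e) (dd x) = 0) ->
  (forall x, ipw E w (fun e => F e - dd z e) (dd x) = 0) ->
  y set0 = z set0 -> forall S, S \in V -> y S = z S.
Proof.
move=> hy hz h00 S hS.
pose x := fun S => y S - z S.
have : ipw E w (dd x) (dd x) = 0.
  have -> : ipw E w (dd x) (dd x) =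
    1 * ipw E w (fun e => F e - dd z e) (dd x) + (-1) * ipw E w (fun e => F e - dd y e) (dd x).
    rewrite -ipw_lin_l; apply: ipw_ext => // e _; rewrite /dd /x; ring.
  by rewrite hy hz; ring.
move/(@ipw_pos _ _ _ _ hw) => hd.
have := @dd_const _ _ _ _ hconn h0 _ hd _ hS; rewrite /x h00 subrr => /eqP.
by rewrite subr_eq0 => /eqP.
Qed.

Definition suppl (R : realFieldType) (T : finType) (l : seq {set T}) (u : {set T} -> R) :=
  forall S, S \notin l -> u S = 0.

Arguments suppl {R T}.

Lemma dd_lin (R : realFieldType) (T : finType) a b (u v : {set T} -> R) e :
  dd (fun S => a * u S + b * v S) e = a * dd u e + b * dd v e.
Proof. rewrite /dd; ring. Qed.

Lemma dd_ext (R : realFieldType) (T : finType) (u v : {set T} -> R) e :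
  (forall S, u S = v S) -> dd u e = dd v e.
Proof. by move=> h; rewrite /dd !h. Qed.

Lemma ipw_zero_r (R : realFieldType) (T : finType) (E : {set edge T}) (w : edge T -> R)
  f h : (forall e, e \in E -> f e = 0) -> ipw E w h f = 0.
Proof.
by move=> hf; rewrite /ipw big1 // => e he; rewrite hf // mulr0.
Qed.

Lemma proj_ex (R : realFieldType) (T : finType) (E : {set edge T})
  (w : edge T -> R) (hw : forall e, e \in E -> 0 < w e) (l : seq {set T}) :
  forall f : edge T -> R, exists u : {set T} -> R, suppl l u /\
    forall u', suppl l u' -> ipw E w (fun e => f e - dd u e) (dd u') = 0.
Proof.
elim: l => [|S0 l IH] f.
  exists (fun _ => 0); split => // u' hu'.
  by rewrite /ipw big1 // => e _; rewrite /dd !hu' // subrr mulr0.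
have [u1 [s1 o1]] := IH f.
pose d0 : {set T} -> R := fun S => if S == S0 then 1 else 0.
have [u2 [s2 o2]] := IH (dd d0).
pose sg := fun S => d0 S - u2 S.
have o2' : forall x, suppl l x -> ipw E w (dd sg) (dd x) = 0.
  move=> x hx; rewrite -(o2 x hx); apply: ipw_ext => // e _.
  by rewrite /dd /sg; ring.
have claim : forall g, (forall x, suppl l x -> ipw E w g (dd x) = 0) ->
    ipw E w g (dd sg) = 0 -> forall u', suppl (S0 :: l) u' -> ipw E w g (dd u') = 0.
  move=> g hg hs u' hu'.
  pose u'' := fun S => u' S0 * u2 S + (if S == S0 then 0 else u' S).
  have hu'' : suppl l u''.
    move=> S hS; rewrite /u'' s2 // mulr0 add0r.
    case: eqP => // /eqP hne; apply: hu'.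
    by rewrite in_cons negb_or hne.
  have -> : ipw E w g (dd u') = ipw E w g (fun e => u' S0 * dd sg e + 1 * dd u'' e).
    apply: ipw_ext => // e _; rewrite -dd_lin; apply: dd_ext => S.
    rewrite /sg /d0 /u''; case: eqP => [->|_]; ring.
  by rewrite ipw_lin_r hs hg //; ring.
have [hc|hc] := eqVneq (ipw E w (dd sg) (dd sg)) 0.
  have hz := @ipw_pos _ _ _ _ hw _ hc.
  exists u1; split.
    by move=> S; rewrite in_cons negb_or => /andP[_ /s1].
  apply: claim; first exact: o1.
  exact: ipw_zero_r.
pose r := fun e => f e - dd u1 e.
pose al := ipw E w r (dd sg) / ipw E w (dd sg) (dd sg).
exists (fun S => 1 * u1 S + al * sg S); split.
  move=> S; rewrite in_cons negb_or => /andP[hne hl].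
  rewrite /sg /d0 s1 // s2 // (negbTE hne); ring.
have hg : forall x, ipw E w (fun e => f e - dd (fun S => 1 * u1 S + al * sg S) e) x
    = 1 * ipw E w r x + (- al) * ipw E w (dd sg) x.
  move=> x; rewrite -ipw_lin_l; apply: ipw_ext => // e _; rewrite dd_lin /r; ring.
apply: claim.
  by move=> x hx; rewrite hg o1 // o2' //; ring.
rewrite hg /al; field; exact: hc.
Qed.

Theorem mainTheorem10 (R : realFieldType) (T : finType)
  (V : {set {set T}}) (E : {set edge T}) (w : edge T -> R)
  (hsub : is_subgraph V E) (hconn : connected_subgraph V E)
  (h0 : set0 \in V) (hN : [set: T] \in V)
  (hw : forall e, e \in E -> 0 < w e) :
  (* existence and uniqueness (functions on V' compared on V') *)
  (forall (v : {set T} -> R), v set0 = 0 -> forall i : T,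
     (exists ui, is_component V E w v i ui) /\
     (forall ui ui', is_component V E w v i ui -> is_component V E w v i ui' ->
        forall S, S \in V -> ui S = ui' S)) /\
  (* (a) efficiency *)
  (forall (v : {set T} -> R) (vs : T -> {set T} -> R), v set0 = 0 ->
     (forall i, is_component V E w v i (vs i)) ->
     forall S, S \in V -> \sum_(i : T) vs i S = v S) /\
  (* (b) null player *)
  (forall (v : {set T} -> R) (vs : T -> {set T} -> R), v set0 = 0 ->
     (forall i, is_component V E w v i (vs i)) ->
     forall i, (forall S, (S, i) \in E -> v (S :|: [set i]) - v S = 0) ->
     forall S, S \in V -> vs i S = 0) /\
  (* (d) linearity *)
  (forall (v v' : {set T} -> R) (a a' : R) (vs vs' ws : T -> {set T} -> R),
     v set0 = 0 -> v' set0 = 0 ->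
     (forall i, is_component V E w v i (vs i)) ->
     (forall i, is_component V E w v' i (vs' i)) ->
     (forall i, is_component V E w (fun S => a * v S + a' * v' S) i (ws i)) ->
     forall i S, S \in V -> ws i S = a * vs i S + a' * vs' i S).
Proof.
have UG := @uniq_gen R T V E w hconn h0 hw.
split.
  move=> v hv i; split.
    have [u [_ o]] := @proj_ex R T E w hw (enum [set: {set T}]) (ddi i v).
    exists (fun S => u S - u set0); split; first by rewrite subrr.
    split; first by exists (fun S => u S - u set0).
    move=> u'; rewrite -(o u'); last by move=> S; rewrite mem_enum inE.
    by apply: ipw_ext => // e _; rewrite /dd; ring.
  move=> ui ui' [h1 [_ o1]] [h2 [_ o2]].
  by apply: (UG (ddi i v)) => //; rewrite h1 h2.
split.
  move=> v vs hv hc S hS.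
  apply: (UG (fun e => \sum_i ddi i v e) (fun S => \sum_i vs i S) v) => //.
  - move=> x; transitivity (\sum_(i : T) ipw E w (fun e => ddi i v e - dd (vs i) e) (dd x)); last first.
      by rewrite big1 // => j _; case: (hc j) => _ [_ ->].
    rewrite -ipw_sum_l; apply: ipw_ext => // e _.
    by rewrite sumrB /dd sumrB.
  - move=> x; apply: ipw_zero_l => e he.
    rewrite (bigD1 e.2) //= big1 => [|j hj]; last by rewrite /ddi eq_sym (negbTE hj).
    by rewrite /ddi eqxx addr0 /dd subrr.
  - by rewrite hv big1 // => j _; case: (hc j).
split.
  move=> v vs hv hc i hnull S hS.
  case: (hc i) => hi0 [_ oi].
  apply: (UG (ddi i v) (vs i) (fun _ => 0)) => //.
  move=> x; apply: ipw_zero_l => [[S1 j]] he.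
  rewrite /ddi /dd /=; case: eqP => [hj|_]; last by rewrite !subrr.
  by subst j; rewrite hnull // !subr0.
move=> v v' a a' vs vs' ws hv hv' hc hc' hcw i S hS.
case: (hcw i) => hw0 [_ ow].
case: (hc i) => h1 [_ o1]; case: (hc' i) => h2 [_ o2].
apply: (UG (ddi i (fun S => a * v S + a' * v' S)) (ws i) (fun S => a * vs i S + a' * vs' i S)) => //.
- move=> x; transitivity (a * ipw E w (fun e => ddi i v e - dd (vs i) e) (dd x)
     + a' * ipw E w (fun e => ddi i v' e - dd (vs' i) e) (dd x)); last first.
    by rewrite o1 o2; ring.
  rewrite -ipw_lin_l; apply: ipw_ext => // e _.
  by rewrite /ddi /dd; case: eqP => _; ring.
- by rewrite hw0 h1 h2; ring.
Qed.
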